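(* For every $d\ge1$, \[ \psi_{-1}^{(d)}(x_1,\,x_1+x_2,\,\dots,\,x_1+\cdots+x_d)=\frac{1}{x_1+\cdots+x_d}\,\bigl(\log(\mathsf{paj})\bigr)^{d}(x_1,\dots,x_d). \]
   Context: Moulds: families $M=(M^m(x_1,\dots,x_m))_{m\ge0}$ of rational functions, with product $(M\times N)^m(x_1,\dots,x_m)=\sum_{k=0}^mM^k(x_1,\dots,x_k)N^{m-k}(x_{k+1},\dots,x_m)$ and unit $1$ (equal to $1$ in length $0$ and $0$ otherwise). $\mathsf{paj}^0=1$ and $\mathsf{paj}^m(x_1,\dots,x_m)=\frac1{x_1(x_1+x_2)\cdots(x_1+\cdots+x_m)}$ for $m\ge1$. $\log(\mathsf{paj}):=\sum_{h\ge1}\frac{(-1)^{h+1}}{h}(\mathsf{paj}-1)^{\times h}$ (powers for the product $\times$; finite in each length). Vines: a bunch of $n$ grapes $g_n$ on labels $\{i,\dots,i+n\}$ is the tree with edges joining the stalk $i$ to each grape $i+1,\dots,i+n$. A vine with $d$ grapes is a sequence $v=g_{n_1}\cdots g_{n_k}$ with $n_j\ge1$, $n_1+\cdots+n_k=d$, giving the rooted tree on $\{0,1,\dots,d\}$ (root $0$) obtained by taking $g_{n_1}$ on $\{0,\dots,n_1\}$ and successively grafting $g_{n_j}$ on labels $\{n_1+\cdots+n_{j-1},\dots,n_1+\cdots+n_j\}$, its stalk being identified with the highest-labelled grape $n_1+\cdots+n_{j-1}$ of the previous vine. Its height is $h(v)=k$. $\mathcal V_d$ is the set of vines with $d$ grapes.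 With $x_0=0$, $x_v=\prod_{(i,j)}(x_j-x_i)$ over edges $(i,j)$ of $v$ with $i<j$. Define $\psi_{-1}^{(d)}(x_1,\dots,x_d)=\sum_{v\in\mathcal V_d}\frac{(-1)^{h(v)+1}}{h(v)}\frac{1}{x_v\,x_d}$. *)

(* Defs.v *)
From HB Require Import structures.
From mathcomp Require Import all_boot all_order all_algebra.
Set Implicit Arguments. Unset Strict Implicit. Unset Printing Implicit Defensive.
Import Order.TTheory GRing.Theory Num.Theory.
Local Open Scope ring_scope.

Section Moulds.
Variable R : numFieldType.

(* A mould, evaluated pointwise: M s is M^m(s_1,...,s_m) with m = size s. *)
Definition mould := seq R -> R.

Definition mone : mould := fun s => if s is [::] then 1 else 0.

Definition mmul (M N : mould) : mould :=
  fun s => \sum_(k < (size s).+1) M (take k s) * N (drop k s).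

Definition msub (M N : mould) : mould := fun s => M s - N s.

Definition mpow (M : mould) (h : nat) : mould := iter h (mmul M) mone.

Definition paj : mould :=
  fun s => \prod_(1 <= k < (size s).+1) (\sum_(i < k) s`_i)^-1.

(* log M = sum_{h>=1} (-1)^(h+1)/h (M-1)^h.  When (M-1) vanishes in length 0
   (as for paj), (M-1)^h vanishes in every length < h, so in length m only the
   terms h = 1..m contribute; we sum exactly those. *)
Definition mlog (M : mould) : mould :=
  fun s => \sum_(1 <= h < (size s).+1)
             ((-1) ^+ h.+1 / h%:R) * mpow (msub M mone) h s.

(* Vines with d grapes <-> compositions (n_1,...,n_k) of d with n_j >= 1. *)
Definition is_vine (d : nat) (c : seq nat) : bool :=
  all (fun n => 0 < n)%N c && (sumn c == d).

(* x_v = prod over edges (i,j), i<j, of (x_j - x_i), for the vine c;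
   the j-th bunch has stalk s_j = n_1+...+n_{j-1} and grapes s_j+1..s_j+n_j.
   x : nat -> R is indexed by labels, with x 0 = 0. *)
Definition xvine (c : seq nat) (x : nat -> R) : R :=
  \prod_(j < size c)
     \prod_(1 <= t < (nth 0%N c j).+1)
        (x (sumn (take j c) + t)%N - x (sumn (take j c))).

Definition lab (s : seq R) (i : nat) : R :=
  if i is i'.+1 then s`_i' else 0.

Definition psi_m1 (s : seq R) : R :=
  let d := size s in
  \sum_(k < d.+1) \sum_(t : k.-tuple 'I_d.+1 | is_vine d (map val t))
     ((-1) ^+ k.+1 / k%:R) / (xvine (map val t) (lab s) * lab s d).

End Moulds.

(* Main.v *)
Require Import Defs.
From HB Require Import structures.
From mathcomp Require Import all_boot all_order all_algebra.
From mathcomp Require Import zify ring.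
Import Order.TTheory GRing.Theory Num.Theory.
Local Open Scope ring_scope.

Fixpoint V {R : numFieldType} (h m : nat) (f : seq nat -> R) : R :=
  match h with
  | 0 => (m == 0)%:R * f [::]
  | h'.+1 => \sum_(a < m.+1 | (0 < a)%N) V h' (m - a) (fun c => f (nat_of_ord a :: c))
  end.

Lemma is_vine_cons (m a : nat) (c : seq nat) :
  is_vine m (a :: c) = [&& (0 < a)%N, (a <= m)%N & is_vine (m - a) c].
Proof.
rewrite /is_vine /=.
case: (ltnP 0 a) => //= _.
case: (leqP a m) => Ham /=.
  congr (_ && _); apply/eqP/eqP; lia.
apply/andP => -[_ /eqP]; lia.
Qed.

Lemma V_ext (R : numFieldType) h m (f g : seq nat -> R) :
  (forall c, is_vine m c -> f c = g c) -> V h m f = V h m g.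
Proof.
elim: h m f g => [|h IH] m f g H /=.
  case: m H => [|m] H; last by rewrite !mul0r.
  by rewrite H.
apply: eq_bigr => a Ha; apply: IH => c Hc; apply: H.
rewrite is_vine_cons Ha Hc -ltnS ltn_ord.
done.
Qed.

Lemma V_scale (R : numFieldType) h m (f : seq nat -> R) k :
  V h m (fun c => k * f c) = k * V h m f.
Proof.
elim: h m f => [|h IH] m f /=; first by rewrite mulrCA.
rewrite mulr_sumr; apply: eq_bigr => a _.
exact: (IH _ (fun c => f (nat_of_ord a :: c))).
Qed.

Lemma V_tuple (R : numFieldType) N h m (f : seq nat -> R) :
  (m < N)%N ->
  \sum_(t : h.-tuple 'I_N | is_vine m (map val t)) f (map val t) = V h m f.
Proof.
elim: h m f => [|h IH] m f HmN /=.
  rewrite big_mkcond /=.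
  rewrite (eq_bigr (fun _ => if is_vine m [::] then f [::] else 0)); last first.
    by move=> t _; rewrite tuple0.
  rewrite sumr_const card_tuple expn0 /is_vine /= eq_sym.
  by case: (m == 0); rewrite ?mul1r ?mul0r.
rewrite big_mkcond /=.
rewrite (reindex (fun p : 'I_N * h.-tuple 'I_N => [tuple of p.1 :: p.2])) /=; last first.
  apply: onW_bij.
  exists (fun t : h.+1.-tuple 'I_N => (thead t, [tuple of behead t])).
    by case=> a t /=; congr (_, _); apply: val_inj.
  move=> t /=; apply: val_inj => /=; by case: t => -[|a s].
rewrite -(pair_big xpredT xpredT (fun (a : 'I_N) (t : h.-tuple 'I_N) =>
  if is_vine m [seq val i | i <- a :: t] then f [seq val i | i <- a :: t] else 0)) /=.
rewrite (big_ord_widen_cond _ (fun a => (0 < a)%N) (fun a => V h (m - a) (fun c => f (a :: c))) HmN).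
rewrite [RHS]big_mkcond /=.
apply: eq_bigr => a _.
under eq_bigr => t _ do rewrite is_vine_cons.
case: (ltnP 0 a) => Ha /=; last by rewrite big1.
rewrite ltnS; case: (leqP a m) => Ham /=; last by rewrite big1.
rewrite -big_mkcond -IH //; lia.
Qed.

Fixpoint B {R : numFieldType} (c : seq nat) (s : seq R) : R :=
  match c with
  | [::] => 1
  | n :: c' => paj (take n s) * B c' (drop n s)
  end.

Lemma mpow_V (R : numFieldType) h (s : seq R) :
  mpow (msub (@paj R) (@mone R)) h s = V h (size s) (fun c => B c s).
Proof.
elim: h s => [|h IH] s /=.
  by case: s => [|a s] /=; rewrite ?mulr1 ?mul0r.
rewrite /mmul [RHS]big_mkcond /=; apply: eq_bigr => k _.
rewrite IH size_drop.
case: (ltnP 0 k) => Hk /=.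
  rewrite V_scale; congr (_ * _).
  rewrite /msub; case E: (take k s) => [|a t] /=; last by rewrite subr0.
  have := ltn_ord k; rewrite ltnS => Hks.
  by move: (congr1 size E); rewrite size_take_min /=; lia.
have -> : nat_of_ord k = 0%N by lia.
by rewrite take0 /msub /paj /= big_geq // subrr mul0r.
Qed.

Lemma xvine_cons (R : numFieldType) n c (L : nat -> R) :
  xvine (n :: c) L = (\prod_(1 <= t < n.+1) (L t - L 0%N)) * xvine c (fun i => L (n + i)%N).
Proof.
rewrite /xvine big_ord_recl /=; congr (_ * _).
apply: eq_bigr => j _ /=; apply: eq_bigr => t _.
by rewrite addnA.
Qed.

Lemma xvine_B (R : numFieldType) c (x : seq R) (L : nat -> R) :
  (forall i j, (j <= i <= size x)%N -> L i - L j = \sum_(j <= k < i) x`_k) ->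
  is_vine (size x) c -> (xvine c L)^-1 = B c x.
Proof.
elim: c x L => [|n c IH] x L HL /=.
  by rewrite /xvine big_ord0 invr1.
rewrite is_vine_cons => /and3P[Hn Hnx Hv].
rewrite xvine_cons invfM; congr (_ * _).
  rewrite /paj size_take_min (minn_idPl Hnx) -prodfV.
  apply: eq_big_nat => t /andP[Ht1 Ht2].
  rewrite HL; last by lia.
  rewrite big_mkord; congr (_^-1); apply: eq_bigr => i _.
  by rewrite nth_take //; have := ltn_ord i; lia.
apply: IH; last by rewrite size_drop.
move=> i j; rewrite size_drop => Hij.
rewrite HL; last by lia.
rewrite (addnC n j) big_addn addKn; apply: eq_bigr => k _.
by rewrite nth_drop addnC.
Qed.

Theorem theorem2p8 (R : numFieldType) (d : nat) (x : seq R) :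
  (1 <= d)%N -> size x = d ->
  (forall i j : nat, (i < j <= d)%N -> \sum_(i <= k < j) x`_k != 0) ->
  psi_m1 [seq \sum_(k < i.+1) x`_k | i <- iota 0 d]
  = (\sum_(k < d) x`_k)^-1 * mlog (@paj R) x.
Proof.
move=> Hd Hx _.
set y := [seq \sum_(k < i.+1) x`_k | i <- iota 0 d].
have Hy : size y = d by rewrite size_map size_iota.
have HL : forall i, (i <= d)%N -> lab y i = \sum_(k < i) x`_k.
  case=> [|i] Hi /=; first by rewrite big_ord0.
  by rewrite /y (nth_map 0%N) ?size_iota // nth_iota.
have HL2 : forall i j, (j <= i <= size x)%N -> lab y i - lab y j = \sum_(j <= k < i) x`_k.
  move=> i j; rewrite Hx => /andP[Hji Hid].
  rewrite !HL //; last by lia.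
  rewrite -!(big_mkord xpredT) (@big_cat_nat _ _ _ j 0 i) //=.
  by rewrite addrC addrK.
rewrite /psi_m1 /= Hy.
under eq_bigr => k _ do rewrite (@V_tuple R d.+1 k d (fun c => ((-1) ^+ k.+1 / k%:R) / (xvine c (lab y) * lab y d)) (ltnSn d)).
rewrite (eq_bigr (fun k : 'I_d.+1 => ((-1) ^+ k.+1 / k%:R * (lab y d)^-1) * V k d (fun c => B c x))); last first.
  move=> k _; rewrite -V_scale; apply: V_ext => c Hc.
  rewrite invfM -(@xvine_B R c x (lab y) HL2) ?Hx //; ring.
rewrite /mlog Hx mulr_sumr -(big_mkord xpredT (fun i => (-1) ^+ i.+1 / i%:R * (lab y d)^-1 * V i d (fun c => B c x))) [in LHS]big_ltn // invr0 mulr0 !mul0r add0r.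
apply: eq_big_nat => k _.
rewrite mpow_V Hx HL //.
by rewrite mulrCA mulrA.
Qed.
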